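(* Let $f\colon\mathbb{R}\to\mathbb{R}$ have the Baire property, let $I$ be an open interval and let $\varepsilon\ge 0$. The following are equivalent: (i) $f$ satisfies the condition $S(I,A,\varepsilon)$ for every residual set $A\subset\mathbb{R}$; (ii) $f$ satisfies $S(I,A,\varepsilon)$ for every residual set $A\subset\mathbb{R}$ such that $f\restriction A$ is continuous; (iii) there exists a residual set $A\subset\mathbb{R}$ such that $f\restriction A$ is continuous and $f$ satisfies $S(I,A,\varepsilon)$.
   Context: For $a,b\in\mathbb{R}$, $I(a,b)$ denotes the open interval with end-points $a$ and $b$. For $A\subset\mathbb{R}$, an interval $J\subset\mathbb{R}$ and $\varepsilon\ge0$, a function $f\colon\mathbb{R}\to\mathbb{R}$ satisfies the condition $S(J,A,\varepsilon)$ if for all $a,b\in J$ with $f(a)<f(b)$ there exists $x\in A\cap I(a,b)$ with $f(x)\in(f(a)-\varepsilon,f(b)+\varepsilon)$. A function has the Baire property if preimages of open sets have the Baire property; a set is residual if its complement is meager. *)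

(* Defs.v *)
From Stdlib Require Import Reals Lra.
Open Scope R_scope.

Definition Iab (a b x : R) : Prop := Rmin a b < x < Rmax a b.

(* Open intervals (possibly unbounded): endpoints in the extended reals,
   None on the left = -oo, None on the right = +oo. *)
Definition oint (lo hi : option R) : R -> Prop := fun x =>
  match lo with Some a => a < x | None => True end /\
  match hi with Some b => x < b | None => True end.

Definition cond_S (f : R -> R) (J A : R -> Prop) (eps : R) : Prop :=
  forall a b, J a -> J b -> f a < f b ->
    exists x, A x /\ Iab a b x /\ f a - eps < f x < f b + eps.

Definition is_open (U : R -> Prop) : Prop :=
  forall x, U x -> exists d, 0 < d /\ forall y, Rabs (y - x) < d -> U y.

Definition closure (N : R -> Prop) (x : R) : Prop :=
  forall d, 0 < d -> exists y, N y /\ Rabs (y - x) < d.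

Definition nowhere_dense (N : R -> Prop) : Prop :=
  ~ exists x d, 0 < d /\ forall y, Rabs (y - x) < d -> closure N y.

Definition meager (M : R -> Prop) : Prop :=
  exists Ns : nat -> (R -> Prop),
    (forall n, nowhere_dense (Ns n)) /\
    forall x, M x -> exists n, Ns n x.

Definition residual (A : R -> Prop) : Prop := meager (fun x => ~ A x).

Definition set_Baire (B : R -> Prop) : Prop :=
  exists U, is_open U /\ meager (fun x => (B x /\ ~ U x) \/ (U x /\ ~ B x)).

Definition fun_Baire (f : R -> R) : Prop :=
  forall U, is_open U -> set_Baire (fun x => U (f x)).

Definition cont_on_restr (f : R -> R) (A : R -> Prop) : Prop :=
  forall x, A x -> forall e, 0 < e -> exists d, 0 < d /\
    forall y, A y -> Rabs (y - x) < d -> Rabs (f y - f x) < e.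

(* Main.v *)
Require Import Defs.
From Stdlib Require Import Reals Lra Lia ZArith Cantor ClassicalEpsilon Classical.
Open Scope R_scope.

Lemma meager_sub (M M' : R -> Prop) : meager M -> (forall x, M' x -> M x) -> meager M'.
Proof.
intros [Ns [H1 H2]] H. exists Ns; split; auto.
Qed.

Lemma meager_cunion (M : nat -> R -> Prop) : (forall n, meager (M n)) ->
  meager (fun x => exists n, M n x).
Proof.
intros H.
pose (G n := proj1_sig (constructive_indefinite_description _ (H n))).
assert (HG : forall n, (forall m, nowhere_dense (G n m)) /\ forall x, M n x -> exists m, G n m x).
{ intro n; exact (proj2_sig (constructive_indefinite_description _ (H n))). }
exists (fun k => G (fst (Cantor.of_nat k)) (snd (Cantor.of_nat k))). split.
- intro k. apply HG.
- intros x [n Hn]. destruct (proj2 (HG n) x Hn) as [m Hm].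
  exists (Cantor.to_nat (n, m)). rewrite Cantor.cancel_of_to. exact Hm.
Qed.

Lemma residual_inter A B : residual A -> residual B -> residual (fun x => A x /\ B x).
Proof.
intros HA HB. unfold residual.
apply meager_sub with (fun x => exists n, (match n with O => fun x => ~ A x | _ => fun x => ~ B x end) x).
- apply meager_cunion. intros [|n]; assumption.
- intros x Hx. destruct (classic (A x)) as [Ha|Ha].
  + exists 1%nat. intro Hb; apply Hx; auto.
  + exists 0%nat. exact Ha.
Qed.

Lemma nd_step N a b : nowhere_dense N -> a < b ->
  exists a' b', a <= a' /\ a' < b' /\ b' <= b /\ forall z, a' <= z <= b' -> ~ N z.
Proof.
intros HN Hab.
assert (H : exists y, Rabs (y - (a+b)/2) < (b-a)/2 /\ ~ closure N y).
{ apply NNPP; intro Hc. apply HN. exists ((a+b)/2), ((b-a)/2). split; [lra|].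
  intros y Hy. apply NNPP; intro Hy2. apply Hc. exists y; auto. }
destruct H as [y [Hy Hcl]].
assert (H2 : exists d, 0 < d /\ forall z, N z -> d <= Rabs (z - y)).
{ apply NNPP; intro Hc. apply Hcl. intros d Hd. apply NNPP; intro Hc2.
  apply Hc. exists d; split; auto. intros z Hz. apply Rnot_lt_le. intro Hlt.
  apply Hc2. exists z; auto. }
destruct H2 as [d [Hd Hz]].
set (r := Rmin (d/2) (((b-a)/2 - Rabs (y - (a+b)/2))/2)).
assert (Hr1 : r <= d/2) by apply Rmin_l.
assert (Hr2 : r <= ((b-a)/2 - Rabs (y - (a+b)/2))/2) by apply Rmin_r.
assert (Hr0 : 0 < r) by (apply Rmin_pos; lra).
exists (y - r), (y + r).
assert (Habs := Rle_abs (y - (a+b)/2)).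
assert (Habs2 := Rle_abs (-(y - (a+b)/2))). rewrite Rabs_Ropp in Habs2.
split; [lra|]. split; [lra|]. split; [lra|].
intros z Hzr HNz. specialize (Hz z HNz).
assert (Rabs (z - y) <= r). { apply Rabs_le; lra. } lra.
Qed.

Lemma baire_dense A : residual A -> forall x d, 0 < d -> exists y, A y /\ Rabs (y - x) < d.
Proof.
intros [Ns [HNs Hcov]] x d Hd.
assert (Hst : forall (n : nat) (p : R * R), exists q : R * R,
  fst p < snd p -> fst p <= fst q /\ fst q < snd q /\ snd q <= snd p /\
     forall z, fst q <= z <= snd q -> ~ Ns n z).
{ intros n [a b]. destruct (Rlt_dec a b) as [H|H].
  - destruct (nd_step (Ns n) a b (HNs n) H) as [a' [b' Hq]]. exists (a', b'). simpl; auto.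
  - exists (0,0). simpl; intro; contradiction. }
pose (g n p := proj1_sig (constructive_indefinite_description _ (Hst n p))).
assert (Hg : forall n p, fst p < snd p -> fst p <= fst (g n p) /\ fst (g n p) < snd (g n p) /\ snd (g n p) <= snd p /\
     forall z, fst (g n p) <= z <= snd (g n p) -> ~ Ns n z).
{ intros n p. exact (proj2_sig (constructive_indefinite_description _ (Hst n p))). }
pose (s := fix s n := match n with O => (x - d/2, x + d/2) | S k => g k (s k) end).
assert (Hlt : forall n, fst (s n) < snd (s n)).
{ induction n; simpl. lra. apply (Hg n (s n) IHn). }
assert (Hmono : forall n m, (n <= m)%nat -> fst (s n) <= fst (s m) /\ snd (s m) <= snd (s n)).
{ intros n m Hnm. induction Hnm. lra.
  destruct (Hg m (s m) (Hlt m)) as [h1 [h2 [h3 h4]]]. simpl. lra. }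
assert (Hnest : forall n m, fst (s n) <= snd (s m)).
{ intros n m. destruct (Nat.le_ge_cases n m) as [H|H].
  - destruct (Hmono n m H). specialize (Hlt m). lra.
  - destruct (Hmono m n H). specialize (Hlt n). lra. }
set (E := fun r => exists n, r = fst (s n)).
assert (Hb : bound E). { exists (snd (s 0%nat)). intros r [n ->]. apply Hnest. }
assert (He : exists r, E r). { exists (fst (s 0%nat)). exists 0%nat; auto. }
destruct (completeness E Hb He) as [L [HL1 HL2]].
assert (HLa : forall n, fst (s n) <= L). { intro n. apply HL1. exists n; auto. }
assert (HLb : forall n, L <= snd (s n)). { intro n. apply HL2. intros r [k ->]. apply Hnest. }
exists L. split.
- apply NNPP; intro HA. destruct (Hcov L HA) as [n Hn].
  destruct (Hg n (s n) (Hlt n)) as [_ [_ [_ h4]]].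
  apply (h4 L). split; [apply (HLa (S n)) | apply (HLb (S n))]. exact Hn.
- specialize (HLa 0%nat). specialize (HLb 0%nat). simpl in *. apply Rabs_def1; lra.
Qed.

Lemma ball_open c r : is_open (fun t => Rabs (t - c) < r).
Proof.
intros x Hx. exists (r - Rabs (x - c)). split; [lra|].
intros y Hy. assert (Htri := Rabs_triang (y - x) (x - c)).
replace (y - x + (x - c)) with (y - c) in Htri by ring. lra.
Qed.

Lemma IZR_split z : IZR z = INR (Z.to_nat z) - INR (Z.to_nat (-z)).
Proof.
rewrite !INR_IZR_INZ, <- minus_IZR. f_equal. lia.
Qed.

Definition cen (n : nat) : R :=
  let '(j, km) := Cantor.of_nat n in let '(k, m) := Cantor.of_nat km in
  (INR k - INR m) / INR (S j).
Definition rad (n : nat) : R :=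
  let '(j, km) := Cantor.of_nat n in 2 / INR (S j).

Lemma base_prop c e : 0 < e -> exists n, Rabs (c - cen n) < rad n /\
  forall t, Rabs (t - cen n) < rad n -> Rabs (t - c) < e.
Proof.
intros He. destruct (archimed_cor1 (e/3)) as [N [HN1 HN2]]; [lra|].
destruct N as [|j]; [lia|].
assert (HNp : 0 < INR (S j)) by (apply lt_0_INR; lia).
set (z := up (c * INR (S j))).
destruct (archimed (c * INR (S j))) as [Hz1 Hz2]. fold z in Hz1, Hz2.
exists (Cantor.to_nat (j, Cantor.to_nat (Z.to_nat z, Z.to_nat (-z)))).
unfold cen, rad. rewrite !Cantor.cancel_of_to. rewrite <- IZR_split.
assert (Hc : Rabs (c - IZR z / INR (S j)) <= 1 / INR (S j)).
{ apply Rabs_le. split.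
  - apply Rmult_le_reg_r with (INR (S j)); auto.
    field_simplify; try lra. 
  - apply Rmult_le_reg_r with (INR (S j)); auto.
    field_simplify; try lra. }
assert (H13 : 3 / INR (S j) < e).
{ replace (3 / INR (S j)) with (3 * / INR (S j)) by (unfold Rdiv; ring). lra. }
assert (0 < 1 / INR (S j)) by (apply Rdiv_lt_0_compat; lra).
split.
- replace (2 / INR (S j)) with (2 * (1 / INR (S j))) by (field; lra). lra.
- intros t Ht. assert (Htri := Rabs_triang (t - IZR z / INR (S j)) (IZR z / INR (S j) - c)).
  rewrite Rabs_minus_sym in Hc.
  replace (t - IZR z / INR (S j) + (IZR z / INR (S j) - c)) with (t - c) in Htri by ring.
  replace (3 / INR (S j)) with (2 / INR (S j) + 1 / INR (S j)) in H13 by (field; lra).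
  lra.
Qed.

Lemma exists_cont f : fun_Baire f -> exists A, residual A /\ cont_on_restr f A.
Proof.
intros Hf.
assert (H : forall n, exists U, is_open U /\
  meager (fun x => ((Rabs (f x - cen n) < rad n) /\ ~ U x) \/ (U x /\ ~ (Rabs (f x - cen n) < rad n)))).
{ intro n. apply (Hf _ (ball_open (cen n) (rad n))). }
pose (U n := proj1_sig (constructive_indefinite_description _ (H n))).
assert (HU : forall n, is_open (U n) /\
  meager (fun x => ((Rabs (f x - cen n) < rad n) /\ ~ U n x) \/ (U n x /\ ~ (Rabs (f x - cen n) < rad n)))).
{ intro n. exact (proj2_sig (constructive_indefinite_description _ (H n))). }
exists (fun x => ~ exists n, ((Rabs (f x - cen n) < rad n) /\ ~ U n x) \/ (U n x /\ ~ (Rabs (f x - cen n) < rad n))).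
split.
- unfold residual. eapply meager_sub. apply meager_cunion. intro n; apply (HU n).
  simpl. intros x Hx. apply NNPP. exact Hx.
- intros x Hx e He. destruct (base_prop (f x) e He) as [n [Hn1 Hn2]].
  assert (HxU : U n x). { apply NNPP; intro Hc. apply Hx. exists n. left; auto. }
  destruct (proj1 (HU n) x HxU) as [d [Hd Hball]].
  exists d. split; auto. intros y Hy Hyx. apply Hn2.
  apply NNPP; intro Hc. apply Hy. exists n. right. split; auto.
Qed.

Lemma iii_i f J A0 eps : residual A0 -> cont_on_restr f A0 -> cond_S f J A0 eps ->
  forall A, residual A -> cond_S f J A eps.
Proof.
intros HA0 Hc HS A HA a b Ha Hb Hab.
destruct (HS a b Ha Hb Hab) as [x [HxA [HxI Hxf]]].
unfold Iab in HxI.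
destruct (Hc x HxA (Rmin (f x - (f a - eps)) (f b + eps - f x))) as [d1 [Hd1 Hcd]].
{ apply Rmin_pos; lra. }
set (d := Rmin d1 (Rmin (x - Rmin a b) (Rmax a b - x))).
assert (Hd : 0 < d). { apply Rmin_pos; [lra|apply Rmin_pos; lra]. }
destruct (baire_dense _ (residual_inter _ _ HA HA0) x d Hd) as [y [[HyA HyA0] Hyx]].
assert (d <= d1) by apply Rmin_l.
assert (d <= Rmin (x - Rmin a b) (Rmax a b - x)) by apply Rmin_r.
assert (Rmin (x - Rmin a b) (Rmax a b - x) <= x - Rmin a b) by apply Rmin_l.
assert (Rmin (x - Rmin a b) (Rmax a b - x) <= Rmax a b - x) by apply Rmin_r.
specialize (Hcd y HyA0 ltac:(lra)).
assert (Rmin (f x - (f a - eps)) (f b + eps - f x) <= f x - (f a - eps)) by apply Rmin_l.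
assert (Rmin (f x - (f a - eps)) (f b + eps - f x) <= f b + eps - f x) by apply Rmin_r.
apply Rabs_def2 in Hyx. apply Rabs_def2 in Hcd.
exists y. unfold Iab. repeat split; auto; lra.
Qed.

Theorem lemma2 (f : R -> R) (lo hi : option R) (eps : R) :
  fun_Baire f -> 0 <= eps ->
  ((forall A, residual A -> cond_S f (oint lo hi) A eps) <->
   (forall A, residual A -> cont_on_restr f A ->
      cond_S f (oint lo hi) A eps)) /\
  ((forall A, residual A -> cont_on_restr f A ->
      cond_S f (oint lo hi) A eps) <->
   (exists A, residual A /\ cont_on_restr f A /\
      cond_S f (oint lo hi) A eps)).
Proof.
intros Hf _. destruct (exists_cont f Hf) as [A0 [HA0 Hc0]].
assert (H32 : (exists A, residual A /\ cont_on_restr f A /\ cond_S f (oint lo hi) A eps) ->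
  forall A, residual A -> cond_S f (oint lo hi) A eps).
{ intros [A [H1 [H2 H3]]]. exact (iii_i f _ A eps H1 H2 H3). }
assert (H21 : (forall A, residual A -> cont_on_restr f A -> cond_S f (oint lo hi) A eps) ->
  exists A, residual A /\ cont_on_restr f A /\ cond_S f (oint lo hi) A eps).
{ intros H. exists A0. auto. }
split; split; intros H; auto; intros A HA _; apply H32; auto.
Qed.
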